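(* Let $(V,\varphi,\xi,\eta,g)$, $\mathcal{F}$ and $p_1,\dots,p_4$ be as in the context, and let $F\in\mathcal{F}$ with associated operators $\mathcal{A}_{e_i}$ ($i=1,\dots,2n$), $\mathcal{A}_\xi$. Then, for all $X\in V$ and $i=1,\dots,2n$: (i) $\mathcal{A}_{e_i}X=h(\mathcal{A}_{e_i}hX)$ for all $i,X$ if and only if $F=p_1F$; (ii) $\mathcal{A}_{e_i}X=\eta(\mathcal{A}_{e_i}hX)\xi=-g(\mathcal{A}_\xi hX,\varphi e_i)\xi$ for all $i,X$ if and only if $F=p_2F$; (iii) $\mathcal{A}_{e_i}X=\eta(X)h(\mathcal{A}_{e_i}\xi)$ for all $i,X$ if and only if $F=p_3F$; (iv) $\mathcal{A}_{e_i}X=\eta(X)\eta(\mathcal{A}_{e_i}\xi)\xi=-\eta(X)g(\mathcal{A}_\xi\xi,\varphi e_i)\xi$ for all $i,X$ if and only if $F=p_4F$.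
   Context: Let $V$ be a real vector space of dimension $2n+1$ with an endomorphism $\varphi$, a vector $\xi$ and a linear form $\eta$ such that $\varphi\xi=0$, $\eta\circ\varphi=0$, $\eta(\xi)=1$, $\varphi^2=\mathrm{id}-\eta\otimes\xi$, and such that $\varphi$ restricted to $\mathbb{D}=\ker\eta$ has eigenvalues $\pm1$ with eigenspaces of equal dimension $n$. Let $g$ be a nondegenerate symmetric bilinear form on $V$ with $g(\varphi X,\varphi Y)=-g(X,Y)+\eta(X)\eta(Y)$; then $\eta(X)=g(X,\xi)$. Write $hX=X-\eta(X)\xi$. Fix a basis $\{e_1,\dots,e_{2n}\}$ of $\mathbb{D}$ and write $Y=Y^ie_i+\eta(Y)\xi$. Let $\mathcal{F}$ be the vector space of all $(0,3)$-tensors of the form $F(X,Y,Z)=Y^ig(\mathcal{A}_{e_i}X,Z)+\eta(Y)g(\mathcal{A}_\xi X,\varphi Z)$, where $\mathcal{A}_{e_i}:V\to V$ and $\mathcal{A}_\xi:V\to\mathbb{D}$ are linear maps (the operators associated with $F$) satisfying for all $X$, $i,j$: $g(\mathcal{A}_{e_i}X,e_j)=-g(\mathcal{A}_{e_j}X,e_i)$; $\mathcal{A}_{\varphi e_i}X=-\varphi(\mathcal{A}_{e_i}X)-g(\mathcal{A}_\xi X,e_i)\xi$ (index extended linearly); $\eta(\mathcal{A}_{e_i}X)=-g(\mathcal{A}_\xi X,\varphi e_i)$; $\eta(\mathcal{A}_\xi X)=0$. Define $p_1(F)(X,Y,Z)=F(hX,hY,hZ)$; $p_2(F)(X,Y,Z)=-\eta(Y)F(hX,hZ,\xi)+\eta(Z)F(hX,hY,\xi)$;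 $p_3(F)(X,Y,Z)=\eta(X)F(\xi,hY,hZ)$; $p_4(F)(X,Y,Z)=\eta(X)\eta(Y)F(\xi,\xi,hZ)-\eta(X)\eta(Z)F(\xi,\xi,hY)$. *)

(* Defs.v *)
From HB Require Import structures.
From mathcomp Require Import all_boot all_order all_algebra.
From mathcomp Require Import reals.
Set Implicit Arguments. Unset Strict Implicit. Unset Printing Implicit Defensive.
Import Order.TTheory GRing.Theory Num.Theory.
Local Open Scope ring_scope.

Section AlmostParacontact.
Variables (R : realType) (V : vectType R).

Definition tensor3 := V -> V -> V -> R.

Definition hproj (eta : 'Hom(V, R^o)) (xi : V) (X : V) : V := X - (eta X : R) *: xi.

Definition almost_paracontact (n : nat) (phi : 'End(V)) (xi : V)
    (eta : 'Hom(V, R^o)) : Prop :=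
  [/\ \dim {:V} = (2 * n).+1,
      [/\ phi xi = 0,
      forall X, eta (phi X) = 0 :> R,
      eta xi = 1 :> R &
      forall X, phi (phi X) = X - (eta X : R) *: xi],
      \dim (lker (phi - \1%VF)%R :&: lker eta)%VS = n &
      \dim (lker (phi + \1%VF)%R :&: lker eta)%VS = n].

Definition compatible_metric (phi : 'End(V)) (eta : 'Hom(V, R^o))
    (g : V -> V -> R) : Prop :=
  [/\ forall a X1 X2 Y, g (a *: X1 + X2) Y = a * g X1 Y + g X2 Y,
      forall X Y, g X Y = g Y X,
      forall X, (forall Y, g X Y = 0) -> X = 0 &
      forall X Y, g (phi X) (phi Y) = - g X Y + (eta X : R) * (eta Y : R)].

Definition D_basis_coords (n : nat) (xi : V) (eta : 'Hom(V, R^o))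
    (e : 'I_(2 * n) -> V) (c : V -> 'I_(2 * n) -> R) : Prop :=
  [/\ forall i, eta (e i) = 0 :> R,
      forall a : 'I_(2 * n) -> R, \sum_i a i *: e i = 0 -> forall i, a i = 0 &
      forall Y, Y = \sum_i c Y i *: e i + (eta Y : R) *: xi].

(* A_Y X for Y in D, extended linearly in the index: A_Y = Y^i A_{e_i} *)
Definition A_ext (n : nat) (c : V -> 'I_(2 * n) -> R)
    (A : 'I_(2 * n) -> 'End(V)) (Y X : V) : V :=
  \sum_j c Y j *: A j X.

(* conditions on the operators associated with F in the class F *)
Definition F_operators (n : nat) (phi : 'End(V)) (xi : V)
    (eta : 'Hom(V, R^o)) (g : V -> V -> R) (e : 'I_(2 * n) -> V)
    (c : V -> 'I_(2 * n) -> R) (A : 'I_(2 * n) -> 'End(V)) (Axi : 'End(V))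
    : Prop :=
  [/\ forall X i j, g (A i X) (e j) = - g (A j X) (e i),
      forall X i, A_ext c A (phi (e i)) X
                  = - phi (A i X) - g (Axi X) (e i) *: xi,
      forall X i, eta (A i X) = - g (Axi X) (phi (e i)) :> R &
      forall X, eta (Axi X) = 0 :> R].

Definition F_of (n : nat) (phi : 'End(V)) (eta : 'Hom(V, R^o))
    (g : V -> V -> R) (c : V -> 'I_(2 * n) -> R)
    (A : 'I_(2 * n) -> 'End(V)) (Axi : 'End(V)) : tensor3 :=
  fun X Y Z => \sum_i c Y i * g (A i X) Z + (eta Y : R) * g (Axi X) (phi Z).

Definition p1 (xi : V) (eta : 'Hom(V, R^o)) (F : tensor3) : tensor3 :=
  fun X Y Z => F (hproj eta xi X) (hproj eta xi Y) (hproj eta xi Z).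

Definition p2 (xi : V) (eta : 'Hom(V, R^o)) (F : tensor3) : tensor3 :=
  fun X Y Z => - ((eta Y : R) * F (hproj eta xi X) (hproj eta xi Z) xi)
               + (eta Z : R) * F (hproj eta xi X) (hproj eta xi Y) xi.

Definition p3 (xi : V) (eta : 'Hom(V, R^o)) (F : tensor3) : tensor3 :=
  fun X Y Z => (eta X : R) * F xi (hproj eta xi Y) (hproj eta xi Z).

Definition p4 (xi : V) (eta : 'Hom(V, R^o)) (F : tensor3) : tensor3 :=
  fun X Y Z => (eta X : R) * (eta Y : R) * F xi xi (hproj eta xi Z)
               - (eta X : R) * (eta Z : R) * F xi xi (hproj eta xi Y).

End AlmostParacontact.

(* Main.v *)
Require Import Defs.
From HB Require Import structures.
From mathcomp Require Import all_boot all_order all_algebra.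
From mathcomp Require Import reals.
From mathcomp Require Import ring lra.
Import Order.TTheory GRing.Theory Num.Theory.
Local Open Scope ring_scope.

Theorem proposition2p2 (R : realType) (V : vectType R) (n : nat)
    (phi : 'End(V)) (xi : V) (eta : 'Hom(V, R^o)) (g : V -> V -> R)
    (e : 'I_(2 * n) -> V) (c : V -> 'I_(2 * n) -> R)
    (A : 'I_(2 * n) -> 'End(V)) (Axi : 'End(V)) :
  almost_paracontact n phi xi eta ->
  compatible_metric phi eta g ->
  D_basis_coords xi eta e c ->
  F_operators phi xi eta g e c A Axi ->
  let F := F_of phi eta g c A Axi in
  let h := hproj eta xi in
  [/\ (forall i X, A i X = h (A i (h X)))
        <-> (forall X Y Z, F X Y Z = p1 xi eta F X Y Z),
      (forall i X, A i X = (eta (A i (h X)) : R) *: xi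
                   /\ (eta (A i (h X)) : R) *: xi
                      = - g (Axi (h X)) (phi (e i)) *: xi)
        <-> (forall X Y Z, F X Y Z = p2 xi eta F X Y Z),
      (forall i X, A i X = (eta X : R) *: h (A i xi))
        <-> (forall X Y Z, F X Y Z = p3 xi eta F X Y Z) &
      (forall i X, A i X = ((eta X : R) * (eta (A i xi) : R)) *: xi
                   /\ ((eta X : R) * (eta (A i xi) : R)) *: xi
                      = - ((eta X : R) * g (Axi xi) (phi (e i))) *: xi)
        <-> (forall X Y Z, F X Y Z = p4 xi eta F X Y Z)].
Proof.
move=> [dimV [phixi etaphi etaxi phi2] _ _] [gL gS gN gphiphi]
  [etae eind cdec] [Aanti Aphi etaA etaAxi] F h.
rewrite {}/F {}/h.
have etaZ : forall (a : R) u, eta (a *: u) = a * eta u :> R.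
  by move=> a u; rewrite linearZ.
have etaD : forall u v, eta (u + v) = eta u + eta v :> R.
  by move=> u v; rewrite linearD.
have etaS : forall (a : 'I_(2 * n) -> V), eta (\sum_i a i) = \sum_i eta (a i) :> R.
  by move=> a; rewrite linear_sum.
have g0l : forall Y, g 0 Y = 0.
  move=> Y; have := gL 1 0 0 Y; rewrite scaler0 addr0 mul1r.
  by move=> /(congr1 (fun t => t - g 0 Y)); rewrite subrr addrK => <-.
have gZ : forall a X Y, g (a *: X) Y = a * g X Y.
  by move=> a X Y; rewrite -[a *: X]addr0 gL g0l addr0.
have gD : forall X1 X2 Y, g (X1 + X2) Y = g X1 Y + g X2 Y.
  by move=> X1 X2 Y; have := gL 1 X1 X2 Y; rewrite scale1r mul1r.
have gB : forall X1 X2 Y, g (X1 - X2) Y = g X1 Y - g X2 Y.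
  by move=> X1 X2 Y; rewrite gD -scaleN1r gZ mulN1r.
have gsum : forall U (a : 'I_(2 * n) -> R) (v : 'I_(2 * n) -> V),
    g U (\sum_i a i *: v i) = \sum_i a i * g U (v i).
  move=> U a v; apply: (big_ind2 (fun x y => g U x = y)).
  - by rewrite gS g0l.
  - by move=> x1 r1 y1 r2 <- <-; rewrite gS gD (gS x1) (gS y1).
  - by move=> i _; rewrite gS gZ gS.
have gxi : forall X, g X xi = eta X.
  move=> X; have := gphiphi X xi; rewrite phixi etaxi mulr1 gS g0l.
  move=> H; lra.
have Ndeg : forall U W, (forall Z, g U Z = g W Z) -> U = W.
  move=> U W H; apply/eqP; rewrite -subr_eq0; apply/eqP/gN => Y.
  by rewrite gB H subrr.
have etah : forall X, eta (hproj eta xi X) = 0 :> R.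
  by move=> X; rewrite /hproj linearB /= (etaZ (eta X)) etaxi mulr1 subrr.
have cuniq : forall Y (a : 'I_(2 * n) -> R) b,
    Y = \sum_i a i *: e i + b *: xi -> forall i, a i = c Y i.
  move=> Y a b HY.
  have hb : b = eta Y.
    rewrite HY etaD etaZ etaS etaxi mulr1 big1 ?add0r //.
    by move=> i _; rewrite etaZ etae mulr0.
  move=> i; apply/eqP; rewrite -subr_eq0; apply/eqP; move: i.
  apply: eind.
  under eq_bigr do rewrite scalerBl.
  rewrite sumrB.
  have := cdec Y; rewrite {1}HY -hb => /addIr ->.
  by rewrite subrr.
have ce : forall j i, c (e j) i = (i == j)%:R.
  move=> j i; symmetry; apply: (cuniq (e j) (fun k => (k == j)%:R) 0).
  rewrite scale0r addr0 (bigD1 j) //= eqxx scale1r big1 ?addr0 //.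
  by move=> k /negPf ->; rewrite scale0r.
have cxi : forall i, c xi i = 0.
  move=> i; symmetry; apply: (cuniq xi (fun _ => 0) 1).
  by rewrite big1 ?add0r ?scale1r // => k _; rewrite scale0r.
have ch : forall Y i, c (hproj eta xi Y) i = c Y i.
  move=> Y i; symmetry; apply: (cuniq _ (c Y) 0).
  by rewrite scale0r addr0 /hproj {1}(cdec Y) addrK.
have he : forall j, hproj eta xi (e j) = e j.
  by move=> j; rewrite /hproj etae scale0r subr0.
have hxi : hproj eta xi xi = 0.
  by rewrite /hproj etaxi scale1r subrr.
have phih : forall Z, phi (hproj eta xi Z) = phi Z.
  by move=> Z; rewrite /hproj linearB linearZ /= phixi scaler0 subr0.
have gphi : forall U Z, g U (phi Z) = \sum_i c Z i * g U (phi (e i)).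
  move=> U Z; rewrite {1}(cdec Z) linearD linearZ /= phixi scaler0 addr0.
  rewrite linear_sum /=.
  under eq_bigr do rewrite linearZ /=.
  by rewrite gsum.
have gh : forall U Z, g U (hproj eta xi Z) = g (hproj eta xi U) Z.
  move=> U Z; rewrite /hproj gS !gB !gZ (gS xi U) (gS xi Z) !gxi (gS Z U).
  by ring.
have gAxi : forall X i, g (Axi X) (phi (e i)) = - eta (A i X).
  by move=> X i; rewrite etaA opprK.
have Axi0 : forall X, (forall i, eta (A i X) = 0 :> R) ->
    forall Z, g (Axi X) (phi Z) = 0.
  move=> X H Z; rewrite gphi big1 // => i _.
  by rewrite gAxi H oppr0 mulr0.
have sdelta : forall j (t : 'I_(2 * n) -> R), \sum_i c (e j) i * t i = t j.
  move=> j t; rewrite (bigD1 j) //= ce eqxx mul1r big1 ?addr0 //.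
  by move=> i ne; rewrite ce (negPf ne) mul0r.
have FXe : forall X j Z, F_of phi eta g c A Axi X (e j) Z = g (A j X) Z.
  by move=> X j Z; rewrite /F_of etae mul0r addr0 sdelta.
have FWxi : forall U W, F_of phi eta g c A Axi U W xi
    = \sum_i c W i * eta (A i U).
  move=> U W; rewrite /F_of phixi gS g0l mulr0 addr0.
  by apply: eq_bigr => i _; rewrite gxi.
have Fxixi : forall W, F_of phi eta g c A Axi xi xi W = g (Axi xi) (phi W).
  move=> W; rewrite /F_of etaxi mul1r big1 ?add0r // => i _.
  by rewrite cxi mul0r.
have AxiX : forall X, Axi X = Axi (hproj eta xi X) + eta X *: Axi xi.
  by move=> X; rewrite /hproj linearB linearZ /= subrK.
split.
- split.
  + move=> H X Y Z; rewrite /p1 /F_of etah mul0r addr0 (Axi0 X) ?mulr0 ?addr0.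
      by apply: eq_bigr => i _; rewrite ch gh -H.
    by move=> i; rewrite H etah.
  + move=> H i X; apply: Ndeg => Z.
    by have := H X (e i) Z; rewrite /p1 he !FXe => ->; rewrite gh.
- split.
  + move=> H X Y Z.
    have Ai : forall i X, A i X = eta (A i (hproj eta xi X)) *: xi.
      by move=> i X'; case: (H i X').
    have Axixi : forall Z, g (Axi xi) (phi Z) = 0.
      apply: Axi0 => i; rewrite Ai hxi linear0.
      by rewrite (linear0 eta) scale0r linear0.
    rewrite /p2 !FWxi /F_of AxiX gD gZ Axixi mulr0 addr0 gphi.
    under eq_bigr do rewrite Ai gZ (gS xi) gxi mulrA.
    have E1 : \sum_i c Z i * g (Axi (hproj eta xi X)) (phi (e i))
        = - \sum_i c Z i * eta (A i (hproj eta xi X)).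
      by rewrite -sumrN; apply: eq_bigr => i _; rewrite gAxi mulrN.
    have E2 : forall W, \sum_i c (hproj eta xi W) i * eta (A i (hproj eta xi X))
        = \sum_i c W i * eta (A i (hproj eta xi X)).
      by move=> W; apply: eq_bigr => i _; rewrite ch.
    rewrite E1 !E2 -mulr_suml; ring.
  + move=> H i X; split; last by rewrite etaA.
    apply: Ndeg => Z; have := H X (e i) Z.
    rewrite /p2 etae mul0r oppr0 add0r he FXe FWxi sdelta => ->.
    by rewrite gZ (gS xi) gxi mulrC.
- split.
  + move=> H X Y Z.
    rewrite /p3 /F_of etah mul0r addr0 (Axi0 X) ?mulr0 ?addr0; last first.
      by move=> i; rewrite H etaZ etah mulr0.
    rewrite mulr_sumr; apply: eq_bigr => i _.
    by rewrite ch gh H gZ; ring.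
  + move=> H i X; apply: Ndeg => Z.
    by have := H X (e i) Z; rewrite /p3 he !FXe => ->; rewrite gh gZ.
- split.
  + move=> H X Y Z.
    have Ai : forall i X, A i X = (eta X * eta (A i xi)) *: xi.
      by move=> i X'; case: (H i X').
    have Axih : forall Z, g (Axi (hproj eta xi X)) (phi Z) = 0.
      by apply: Axi0 => i; rewrite Ai etah mul0r scale0r linear0.
    rewrite /p4 !Fxixi !phih /F_of AxiX gD gZ Axih add0r (gphi _ Y).
    under eq_bigr do rewrite Ai gZ (gS xi) gxi.
    have E1 : \sum_i c Y i * g (Axi xi) (phi (e i))
        = - \sum_i c Y i * eta (A i xi).
      by rewrite -sumrN; apply: eq_bigr => i _; rewrite gAxi mulrN.
    have E3 : \sum_i c Y i * (eta X * eta (A i xi) * eta Z)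
        = (\sum_i c Y i * eta (A i xi)) * (eta X * eta Z).
      by rewrite mulr_suml; apply: eq_bigr => i _; ring.
    rewrite E1 E3; ring.
  + move=> H i X; split; last by rewrite etaA mulrN.
    apply: Ndeg => Z; have := H X (e i) Z.
    rewrite /p4 etae mulr0 mul0r sub0r he Fxixi gAxi FXe => ->.
    by rewrite gZ (gS xi) gxi; ring.
Qed.
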